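(* Let $q$ be a prime power, let $n=m$, let $d\le n$ be even, and let $\tau=d/2$. Then there exist a code $\mathcal C\subseteq\mathbb F_{q^m}^n$ with minimum rank distance exactly $d$ and a word $\mathbf r\in\mathbb F_{q^m}^n$ such that $|\mathcal C\cap\mathcal B_\tau(\mathbf r)|\ge q^{n-\tau}$.
   Context: Fixing a basis of $\mathbb F_{q^m}$ over $\mathbb F_q$, each vector in $\mathbb F_{q^m}^n$ is identified with an $m\times n$ matrix over $\mathbb F_q$; $\mathrm{rk}$ denotes its rank. The minimum rank distance of $\mathcal C$ is $\min\{\mathrm{rk}(\mathbf c_1-\mathbf c_2):\mathbf c_1\ne\mathbf c_2\in\mathcal C\}$, and $\mathcal B_\tau(\mathbf r)=\{\mathbf x:\mathrm{rk}(\mathbf x-\mathbf r)\le\tau\}$. Codes need not be linear. *)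

(* Defs.v *)
From mathcomp Require Import all_boot all_order all_algebra all_field.
Set Implicit Arguments. Unset Strict Implicit. Unset Printing Implicit Defensive.
Import GRing.Theory.
Local Open Scope ring_scope.

Section RankMetric.
Variables (F : finFieldType) (L : fieldExtType F) (n : nat).

Definition vec_to_mx (x : 'rV[L]_n) : 'M[F]_(\dim {:L}, n) :=
  \matrix_(i, j) coord (vbasis {:L}) i (x 0 j).

Definition rk (x : 'rV[L]_n) : nat := \rank (vec_to_mx x).

(* minimum rank distance of a (finite, possibly nonlinear) code C, given as a
   duplicate-free list, equals d *)
Definition min_rank_dist_eq (C : seq 'rV[L]_n) (d : nat) : Prop :=
  (exists c1 c2, [/\ c1 \in C, c2 \in C, c1 != c2 & rk (c1 - c2) = d]) /\
  (forall c1 c2, c1 \in C -> c2 \in C -> c1 != c2 -> (d <= rk (c1 - c2))%N).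

Definition rk_ball (tau : nat) (r : 'rV[L]_n) : pred 'rV[L]_n :=
  fun x => (rk (x - r) <= tau)%N.

End RankMetric.

(* Main.v *)
Require Import Defs.
From mathcomp Require Import all_boot all_order all_algebra all_field.
From mathcomp Require Import all_fingroup cyclic.
Set Implicit Arguments. Unset Strict Implicit. Unset Printing Implicit Defensive.
Import GRing.Theory FinRing.Theory.
Local Open Scope ring_scope.

Lemma exists_ext (F : finFieldType) (s : nat) : (0 < s)%N ->
  {E : fieldExtType F | \dim {:E} = s}.
Proof.
move=> s_gt0.
have F_gt1 := finNzRing_gt1 F.
pose m := (#|F| ^ s)%N.
have m_gt1: (m > 1)%N by rewrite /m (ltn_exp2l 0) // ?ltnW.
have m_gt0 := ltnW m_gt1; have m1_gt0: (m.-1 > 0)%N by rewrite -ltnS prednK.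
have cardF0 : (#|F|%:R : F) = 0.
  have := @expg_cardG _ [set: F]%G (GRing.one F); rewrite inE /= cardsT zmodXgE.
  by move=> ->.
pose q (R : nzRingType) : {poly R} := 'X^m - 'X.
have Dq (R : nzRingType) : q R = ('X^(m.-1) - 1) * ('X - 0).
  by rewrite subr0 mulrBl mul1r -exprSr prednK.
have /FinSplittingFieldFor[/= L splitLq]: q F != 0.
  by rewrite Dq monic_neq0 ?rpredM ?monicXsubC ?monicXnsubC.
rewrite rmorphB rmorphXn /= map_polyX -/(q L) in splitLq.
pose Fm := FinFieldExtType L.
have /finField_galois_generator[/= a _ Da]: (1 <= {:L})%VS by apply: sub1v.
rewrite dimv1 expn1 in Da.
pose Em := fixedSpace (a ^+ s)%g.
have cardL0 : (m%:R : L) = 0.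
  by rewrite /m natrX -(rmorph_nat (in_alg L)) cardF0 rmorph0 expr0n gtn_eqF.
have cardFm : #|Fm| = m.
have{splitLq} [zs DqL defL] := splitLq.
have Uzs: uniq zs.
  rewrite -separable_prod_XsubC -(eqp_separable DqL) Dq separable_root andbC.
  rewrite /root !hornerE subr_eq0 eq_sym expr0n gtn_eqF ?oner_eq0 //=.
  rewrite cyclotomic.separable_Xn_sub_1 // -subn1 natrB // subr_eq0.
  by rewrite cardL0 eq_sym oner_eq0.
  suffices /eq_card->: Fm =i zs.
    apply: succn_inj; rewrite (card_uniqP _) //= -(size_prod_XsubC _ id).
    by rewrite -(eqp_size DqL) size_polyDl size_polyXn // size_polyN size_polyX.
  have in_zs: zs =i Em.
    move=> z; rewrite -root_prod_XsubC -(eqp_root DqL) (sameP fixedSpaceP eqP).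
    rewrite /root !hornerE subr_eq0 /= /m; congr (_ == z).
    elim: (s) => [|i IHi]; first by rewrite gal_id.
    by rewrite expgSr expnSr exprM IHi galM ?Da ?memvf.
  suffices defEm: Em = {:L}%VS by move=> z; rewrite in_zs defEm memvf.
  apply/eqP; rewrite eqEsubv subvf -defL -[Em]subfield_closed agenvS //.
  by rewrite subv_add sub1v; apply/span_subvP=> z; rewrite in_zs.
exists L; apply/eqP.
have := @card_vspace F Fm (Vector.class (FinSplittingFieldType F L)) fullv.
rewrite card_vspacef cardFm /m => H.
by rewrite -(eqn_exp2l _ _ F_gt1) H.
Qed.

Lemma rank_kerP (K : fieldType) m n (A : 'M[K]_(m, n)) :
  (forall v : 'rV_m, v *m A = 0 -> v = 0) -> \rank A = m.
Proof.
move=> H; apply/eqP; rewrite eqn_leq rank_leq_row /= leqNgt; apply/negP => lt.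
have : kermx A != 0 by rewrite -mxrank_eq0 mxrank_ker subn_eq0 -ltnNge.
case/rowV0Pn => v /sub_kermxP vA nz.
by rewrite (H v vA) eqxx in nz.
Qed.

Section MRD.
Variables (F : fieldType) (E : fieldExtType F).

Definition mulmx_of (c : E) : 'M[F]_(\dim {:E}) :=
  \matrix_(i, j) coord (vbasis {:E}) i (c * (vbasis {:E})`_j).

Lemma mulmx_ofB c c' : mulmx_of (c - c') = mulmx_of c - mulmx_of c'.
Proof. by apply/matrixP => i j; rewrite !mxE mulrBl linearB. Qed.

Lemma rank_mulmx_of c : c != 0 -> \rank (mulmx_of c)^T = \dim {:E}.
Proof.
move=> nzc; apply: rank_kerP => v /rowP vM.
set b := vbasis {:E}.
pose x := \sum_j v 0 j *: b`_j.
have cx0 : c * x = 0.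
  rewrite (coord_vbasis (memvf (c * x))); apply: big1 => i _.
  suff -> : coord b i (c * x) = 0 by rewrite scale0r.
  have := vM i; rewrite !mxE => <-.
  rewrite /x mulr_sumr linear_sum /=.
  by apply: eq_bigr => j _; rewrite !mxE -scalerAr linearZ.
have x0 : x = 0 by move: cx0 => /eqP; rewrite mulf_eq0 (negbTE nzc) => /eqP.
apply/rowP => j; rewrite mxE.
have := coord_sum_free (fun j => v 0 j) j (basis_free (vbasisP {:E})).
by rewrite -/b -/x x0 linear0 => <-.
Qed.

Definition Uof (t : nat) (c : E) : 'M[F]_(\dim {:E}, t) := mulmx_of c *m pid_mx t.

Lemma UofB t c c' : Uof t (c - c') = Uof t c - Uof t c'.
Proof. by rewrite /Uof mulmx_ofB mulmxBl. Qed.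

Lemma rank_Uof t c : (t <= \dim {:E})%N -> c != 0 -> \rank (Uof t c) = t.
Proof.
move=> le nzc; rewrite /Uof -mxrank_tr trmx_mul mxrankMfree.
  by rewrite mxrank_tr rank_pid_mx.
by rewrite /row_free rank_mulmx_of.
Qed.

End MRD.

Section Blocks.
Variables (K : fieldType) (t s : nat).
Implicit Types U V : 'M[K]_(s, t).

Definition Aof U : 'M[K]_(t + s, t) := col_mx 1%:M U.
Definition Mof U : 'M[K]_(t + s) := Aof U *m (Aof U)^T.

Lemma rank_Mof U : (\rank (Mof U) <= t)%N.
Proof. exact: leq_trans (mxrankM_maxl _ _) (rank_leq_col _). Qed.

Lemma indep U V : \rank (U - V) = t -> forall v1 v2 : 'rV_t,
  v1 *m (Aof U)^T + v2 *m (Aof V)^T = 0 -> v1 = 0 /\ v2 = 0.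
Proof.
move=> rUV v1 v2; rewrite /Aof !tr_col_mx !trmx1 !mul_mx_row !mulmx1 add_row_mx.
rewrite -row_mx0 => /eq_row_mx [e1 e2].
have ev2 : v2 = - v1 by apply/eqP; rewrite -addr_eq0 addrC e1.
rewrite ev2 mulNmx -mulmxBr -linearB /= in e2.
have fr : row_free (U - V)^T by rewrite /row_free mxrank_tr rUV.
have v10 : v1 = 0 by apply: (row_free_inj fr); rewrite e2 mul0mx.
by rewrite ev2 v10 oppr0.
Qed.

Lemma Mof_diff U V :
  Mof U - Mof V = row_mx (Aof U) (- Aof V) *m (row_mx (Aof U) (Aof V))^T.
Proof. by rewrite tr_row_mx mul_row_col mulNmx. Qed.

Lemma rank_Mof_diff U V : \rank (U - V) = t -> \rank (Mof U - Mof V) = (t + t)%N.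
Proof.
move=> rUV; rewrite Mof_diff mxrankMfree; last first.
  rewrite /row_free mxrank_tr -mxrank_tr tr_row_mx; apply/eqP/rank_kerP => v.
  rewrite -[v]hsubmxK mul_row_col => /(indep rUV) [-> ->]; exact: row_mx0.
rewrite -mxrank_tr tr_row_mx; apply/rank_kerP => v.
rewrite -[v]hsubmxK mul_row_col linearN /= mulmxN -mulNmx.
move=> /(indep rUV) [-> /eqP]; rewrite oppr_eq0 => /eqP ->; exact: row_mx0.
Qed.

End Blocks.

Lemma rank_castmx (K : fieldType) m1 n1 m2 n2 (e : (m1 = m2) * (n1 = n2))
  (A : 'M[K]_(m1, n1)) : \rank (castmx e A) = \rank A.
Proof. destruct e as [e1 e2]; subst m2 n2; by rewrite castmx_id. Qed.

Lemma castmxB (K : fieldType) m1 n1 m2 n2 (e : (m1 = m2) * (n1 = n2))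
  (A B : 'M[K]_(m1, n1)) : castmx e A - castmx e B = castmx e (A - B).
Proof. apply/matrixP => i j; rewrite !castmxE !mxE !castmxE; reflexivity. Qed.

Section Bridge.
Variables (F : finFieldType) (L : fieldExtType F) (n : nat).

Definition word (M : 'M[F]_(\dim {:L}, n)) : 'rV[L]_n :=
  \row_j \sum_i M i j *: (vbasis {:L})`_i.

Lemma word_K M : vec_to_mx (word M) = M.
Proof.
apply/matrixP => i j; rewrite !mxE.
exact: (coord_sum_free (fun i => M i j) i (basis_free (vbasisP {:L}))).
Qed.

Lemma vec_to_mxB (x y : 'rV[L]_n) : vec_to_mx (x - y) = vec_to_mx x - vec_to_mx y.
Proof. by apply/matrixP => i j; rewrite !mxE linearB. Qed.

Lemma rk_word M M' : rk (word M - word M') = \rank (M - M').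
Proof. by rewrite /rk vec_to_mxB !word_K. Qed.

Lemma rk0 : rk (0 : 'rV[L]_n) = 0%N.
Proof.
rewrite /rk; have -> : vec_to_mx (0 : 'rV[L]_n) = 0 by apply/matrixP => i j; rewrite !mxE linear0.
exact: mxrank0.
Qed.

End Bridge.

Theorem corollary3 (F : finFieldType) (L : fieldExtType F) (m n d : nat) :
  \dim {:L} = m -> m = n ->
  (0 < d)%N -> ~~ odd d -> (d <= n)%N ->
  exists (C : seq 'rV[L]_n) (r : 'rV[L]_n),
    [/\ uniq C, min_rank_dist_eq C d &
        (#|F| ^ (n - d./2) <= count (rk_ball (d./2) r) C)%N].
Proof.
move=> hm hmn d0 ev dn; set t := d./2.
have dt : d = (t + t)%N.
  by rewrite -{1}(odd_double_half d) (negbTE ev) add0n -addnn.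
have tn : (t + t <= n)%N by rewrite -dt.
have t_le : (t <= n)%N by apply: leq_trans tn; rewrite leq_addr.
have t_le' : (t <= n - t)%N by rewrite leq_subRL.
have s_gt0 : (0 < n - t)%N.
  by apply: leq_trans t_le'; rewrite lt0n; apply/eqP => t0; move: d0; rewrite dt t0.
have [E hE] := exists_ext F s_gt0.
pose Ef := FinFieldExtType E.
have e1 : (t + \dim {:E})%N = \dim {:L} by rewrite hE hm hmn subnKC.
have e2 : (t + \dim {:E})%N = n by rewrite hE subnKC.
pose w (c : E) : 'rV[L]_n := word (castmx (e1, e2) (Mof (Uof t c))).
have tE : (t <= \dim {:E})%N by rewrite hE.
have key c c' : c != c' -> rk (w c - w c') = d.
  move=> ne; rewrite rk_word castmxB rank_castmx dt rank_Mof_diff //.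
  by rewrite -UofB rank_Uof // subr_eq0.
have winj : injective w.
  move=> c c' eq; apply/eqP/negPn/negP => ne.
  by move: (key c c' ne); rewrite eq subrr rk0 => d00; move: d0; rewrite -d00.
have memE (c : Ef) : c \in enum Ef by rewrite mem_enum.
exists [seq w c | c <- enum Ef], 0; split.
- by rewrite (map_inj_uniq winj); exact: (enum_uniq Ef).
- split.
    exists (w 0), (w 1); split; first by apply: map_f; apply: memE.
    + by apply: map_f; apply: memE.
    + by rewrite (inj_eq winj) eq_sym oner_eq0.
    + by apply: key; rewrite eq_sym oner_eq0.
  move=> c1 c2 /mapP [c _ ->] /mapP [c' _ ->] ne.
  by rewrite key // -(inj_eq winj).
- rewrite (@eq_in_count _ _ predT); last first.
    move=> x /mapP [c _ ->]; rewrite /= /rk_ball subr0 /rk word_K rank_castmx.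
    exact: rank_Mof.
  rewrite count_predT size_map.
  have -> : size (enum Ef) = #|Ef| by rewrite cardE.
  have := @card_vspace F Ef (Vector.class (FinSplittingFieldType F E)) fullv.
  rewrite card_vspacef => ->.
  by rewrite hE.
Qed.
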